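(* Let $\mathcal{V} = \{(x,y) \in \mathbb{C}^2 : e^{-x} + e^{-y} - 1 = 0\}$. If $(a,b) \in \mathcal{V} \cap (0,1)^2$, then $(a,b)$ is strictly minimal on $\mathcal{V}$, i.e. the closed bidisk $\{(z,w)\in\mathbb{C}^2 : |z|\le a,\ |w| \le b\}$ intersects $\mathcal{V}$ only at the point $(a,b)$. *)

(* Defs.v *)
From Stdlib Require Import Reals.
From Coquelicot Require Export Coquelicot.
Open Scope R_scope.

Definition cexp (z : C) : C :=
  (exp (Re z) * cos (Im z), exp (Re z) * sin (Im z)).

Definition inV (x y : C) : Prop :=
  (cexp (- x) + cexp (- y) - 1)%C = 0%C.

(* Main.v *)
Require Import Defs.
From Stdlib Require Import Reals Lra Psatz.
From Coquelicot Require Import Coquelicot.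
Open Scope R_scope.

Definition cpol (t : R) := 1 - t/2 + t^2/24 - t^3/720.

Lemma cos_lb (y : R) : -1 <= y <= 1 -> cpol (y^2) <= cos y.
Proof.
  intro H. pose proof PI2_1.
  destruct (cos_bound y 1) as [H1 _].
  - lra.
  - lra.
  - replace (cpol (y^2)) with (cos_approx y (2*1+1)); [exact H1|].
    unfold cos_approx, cos_term, cpol. simpl. field.
Qed.

Lemma cpol_mono (t s : R) : 0 <= t <= s -> s <= 1 -> cpol s <= cpol t.
Proof.
  intros H1 H2. unfold cpol.
  assert (0 <= 1/2 - (s+t)/24 + (s^2+s*t+t^2)/720) by nra.
  assert (cpol t - cpol s = (s-t)*(1/2 - (s+t)/24 + (s^2+s*t+t^2)/720)) by (unfold cpol; field).
  unfold cpol in *. nra.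
Qed.

Lemma exp_quart (d : R) : 0 <= d -> (1 + d/4)^4 <= exp d.
Proof.
  intro H.
  replace (exp d) with ((exp (d/4))^4).
  - apply pow_incr. split; [lra|]. apply exp_ineq1_le.
  - simpl. rewrite Rmult_1_r, <- !exp_plus. f_equal. field.
Qed.

Lemma poly_id (d : R) :
  (1 + d/4)^4 * cpol (2*d - d^2) =
  1 + d^2/24 + d^3 * (127/720 + d*(829/11520 + d*(27/1280 + d*(37/5760
      + d*(7/5760 + d*(7/30720 + d*(1/18432 + d*(1/184320)))))))).
Proof. unfold cpol. field. Qed.

Lemma horner_pos (d : R) : 0 <= d ->
  0 <= 127/720 + d*(829/11520 + d*(27/1280 + d*(37/5760
      + d*(7/5760 + d*(7/30720 + d*(1/18432 + d*(1/184320))))))).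
Proof.
  intro H.
  repeat (apply Rplus_le_le_0_compat; [lra|]; apply Rmult_le_pos; [exact H|]).
  lra.
Qed.

Lemma key (a x y : R) : 0 < a < 1 -> x^2 + y^2 <= a^2 ->
  exp (-a) * (1 + (a-x)^2/24) <= exp (-x) * cos y.
Proof.
  intros Ha Hxy.
  set (d := a - x).
  assert (Hxa : x <= a) by (destruct (Rle_dec x a); [auto|nra]).
  assert (Hd : 0 <= d) by (unfold d; lra).
  assert (Hy2 : y^2 <= a^2) by nra.
  assert (Hya : -1 <= y <= 1) by nra.
  assert (Ht : y^2 <= 2*d - d^2) by (unfold d; nra).
  assert (Hs1 : 2*d - d^2 <= 1) by (pose proof (pow2_ge_0 (d-1)); lra).
  assert (Hc1 : cpol (2*d - d^2) <= cos y).
  { eapply Rle_trans; [apply cpol_mono|apply cos_lb; exact Hya].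
    - split; [nra|exact Ht].
    - exact Hs1. }
  assert (Hc0 : 0 <= cpol (2*d - d^2)).
  { assert (0 <= 2*d - d^2) by nra. unfold cpol. nra. }
  assert (He : exp (-x) = exp (-a) * exp d).
  { rewrite <- exp_plus. f_equal. unfold d. ring. }
  rewrite He.
  assert (Hq : (1 + d/4)^4 <= exp d) by (apply exp_quart; exact Hd).
  assert (Hp : 1 + d^2/24 <= exp d * cos y).
  { eapply Rle_trans with ((1 + d/4)^4 * cpol (2*d - d^2)).
    - rewrite poly_id. pose proof (horner_pos d Hd).
      assert (0 <= d^3) by (apply pow_le; exact Hd). nra.
    - apply Rmult_le_compat; try assumption. apply pow_le. lra. }
  pose proof (exp_pos (-a)). rewrite Rmult_assoc.
  apply Rmult_le_compat_l; lra.
Qed.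

Lemma re_eq (z w : C) : inV z w ->
  exp (- fst z) * cos (snd z) + exp (- fst w) * cos (snd w) = 1.
Proof.
  destruct z as [x y], w as [u v]. unfold inV, cexp. intro H.
  apply (f_equal fst) in H. simpl in H. rewrite !cos_neg in H. simpl. lra.
Qed.

Lemma cmod_sq (z : C) (a : R) : 0 < a -> Cmod z <= a -> fst z ^ 2 + snd z ^ 2 <= a ^ 2.
Proof.
  destruct z as [x y]. unfold Cmod. simpl fst; simpl snd. intros Ha H.
  pose proof (sqrt_pos (x^2+y^2)).
  rewrite <- (sqrt_sqrt (x^2+y^2)) by nra. nra.
Qed.

Theorem lemma2p4 (a b : R) :
  0 < a < 1 -> 0 < b < 1 -> inV (RtoC a) (RtoC b) ->
  forall z w : C, Cmod z <= a -> Cmod w <= b -> inV z w ->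
  z = RtoC a /\ w = RtoC b.
Proof.
  intros Ha Hb Hab z w Hz Hw Hzw.
  apply re_eq in Hab. simpl in Hab. rewrite cos_0 in Hab.
  apply re_eq in Hzw.
  apply cmod_sq in Hz; [|lra]. apply cmod_sq in Hw; [|lra].
  destruct z as [x y], w as [u v]. simpl in *.
  pose proof (key a x y Ha Hz). pose proof (key b u v Hb Hw).
  pose proof (exp_pos (-a)). pose proof (exp_pos (-b)).
  pose proof (pow2_ge_0 (a-x)). pose proof (pow2_ge_0 (b-u)).
  assert (E1 : (a-x)^2 = 0) by nra.
  assert (E2 : (b-u)^2 = 0) by nra.
  assert (x = a) by nra. assert (u = b) by nra. subst x u.
  assert (y = 0) by nra. assert (v = 0) by nra.
  subst. unfold RtoC. auto.
Qed.
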